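(* Let $p\colon X\to B_1$ and $q\colon Y\to B_2$ be Boolean sets and $\varphi\colon X\to Y$ a morphism of Boolean sets. Then $\varphi(x\vee y)=\varphi(x)\vee\varphi(y)$ for all compatible $x,y\in X$.
   Context: Convention: a ''Boolean algebra'' means a generalized Boolean algebra (relatively complemented distributive lattice with $0$); morphisms of Boolean algebras preserve lattice operations, $0$ and relative complements. Presheaf of sets over a meet semilattice $E$: pairwise disjoint sets $X_e$, restriction maps $x\mapsto x|^e_f$, $X_e\to X_f$ for $e\ge f$, with $|^e_e=\mathrm{id}$ and $(x|^e_f)|^f_g=x|^e_g$; $p(x)=e$ iff $x\in X_e$; global support: all $X_e\ne\emptyset$. Order: $x\le y$ iff $p(x)\le p(y)$ and $x=y|^{p(y)}_{p(x)}$. Compatibility $x\sim y$: $x\wedge y$ exists and $p(x\wedge y)=p(x)\wedge p(y)$. A Boolean set is a presheaf $p\colon X\to B$ with global support over a Boolean algebra $B$ such that $(X,\le)$ has least element $0$, compatible pairs have joins, and $p(x)=0\Rightarrow x=0$. A morphism of Boolean sets is a map $\varphi\colon X\to Y$ with a morphism of Boolean algebras $\overline{\varphi}\colon B_1\to B_2$ such that $q\varphi=\overline{\varphi}p$ and $\varphi(x|^a_b)=\varphi(x)|^{\overline{\varphi}(a)}_{\overline{\varphi}(b)}$ for all $a\ge b$ and $x\in X_a$. *)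

(* Defs.v *)
From HB Require Import structures.
From mathcomp Require Import all_boot all_order.
Set Implicit Arguments. Unset Strict Implicit. Unset Printing Implicit Defensive.
Import Order.Theory.
Local Open Scope order_scope.

(* A generalized Boolean algebra = relatively (sectionally) complemented
   distributive lattice with 0: MathComp's cbDistrLatticeType
   (bottom \bot, meet `&`, join `|`, relative complement x `\` y). *)

Definition BA_morphism (d1 d2 : Order.disp_t)
  (B1 : cbDistrLatticeType d1) (B2 : cbDistrLatticeType d2) (f : B1 -> B2) : Prop :=
  [/\ forall a b, f (a `&` b) = f a `&` f b,
      forall a b, f (a `|` b) = f a `|` f b,
      f \bot = \bot &
      forall a b, f (a `\` b) = f a `\` f b].

(* Presheaf of sets over the meet semilattice B: the carrier X is the disjoint
   union of the fibres X_e = p^-1(e); res x f stands for x|^{p x}_f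
   (only meaningful when f <= p x). *)
Record presheaf (d : Order.disp_t) (B : cbDistrLatticeType d) (X : Type) := Presheaf {
  psh_p : X -> B;
  psh_res : X -> B -> X;
  psh_res_p : forall x f, f <= psh_p x -> psh_p (psh_res x f) = f;
  psh_res_id : forall x, psh_res x (psh_p x) = x;
  psh_res_comp : forall x f g, g <= f -> f <= psh_p x ->
      psh_res (psh_res x f) g = psh_res x g
}.

Section PresheafOrder.
Context (d : Order.disp_t) (B : cbDistrLatticeType d) (X : Type) (P : presheaf B X).

Definition ple (x y : X) : Prop :=
  psh_p P x <= psh_p P y /\ x = psh_res P y (psh_p P x).

Definition is_glb (m x y : X) : Prop :=
  ple m x /\ ple m y /\ forall z, ple z x -> ple z y -> ple z m.

Definition is_lub (j x y : X) : Prop :=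
  ple x j /\ ple y j /\ forall z, ple x z -> ple y z -> ple j z.

Definition is_least (z : X) : Prop := forall x, ple z x.

Definition compatible (x y : X) : Prop :=
  exists m, is_glb m x y /\ psh_p P m = psh_p P x `&` psh_p P y.

Definition global_support : Prop := forall e : B, exists x, psh_p P x = e.

Definition boolean_set : Prop :=
  [/\ global_support,
      exists z, is_least z,
      forall x y, compatible x y -> exists j, is_lub j x y &
      forall x, psh_p P x = \bot -> is_least x].

End PresheafOrder.

Definition BS_morphism (d1 d2 : Order.disp_t)
  (B1 : cbDistrLatticeType d1) (B2 : cbDistrLatticeType d2)
  (X Y : Type) (P : presheaf B1 X) (Q : presheaf B2 Y)
  (phi : X -> Y) (phibar : B1 -> B2) : Prop :=
  [/\ BA_morphism phibar,
      forall x, psh_p Q (phi x) = phibar (psh_p P x) &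
      forall x b, b <= psh_p P x ->
        phi (psh_res P x b) = psh_res Q (phi x) (phibar b)].

(* Main.v *)
Require Import Defs.
From mathcomp Require Import all_boot all_order.
Import Order.Theory.
Local Open Scope order_scope.

Section H.
Context {d : Order.disp_t} {B : cbDistrLatticeType d} {X : Type} (P0 : presheaf B X).

Lemma lub_p j x y : is_lub P0 j x y -> psh_p P0 j = psh_p P0 x `|` psh_p P0 y.
Proof.
move=> [[hx ex] [[hy ey] hl]].
set c := psh_p P0 x `|` psh_p P0 y.
have cj : c <= psh_p P0 j by rewrite leUx hx hy.
set r := psh_res P0 j c.
have pr : psh_p P0 r = c by rewrite /r psh_res_p.
have xr : ple P0 x r.
  rewrite /ple; split; first by rewrite /r psh_res_p // leUl.
  by rewrite /r psh_res_comp // leUl.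
have yr : ple P0 y r.
  rewrite /ple; split; first by rewrite /r psh_res_p // leUr.
  by rewrite /r psh_res_comp // leUr.
have [jr _] := hl r xr yr.
by apply/le_anti; rewrite cj -pr jr.
Qed.

Lemma ple_same u v : ple P0 u v -> psh_p P0 u = psh_p P0 v -> u = v.
Proof. by move=> [_ e] h; rewrite e h psh_res_id. Qed.

Lemma compat_ub a b u : ple P0 a u -> ple P0 b u -> compatible P0 a b.
Proof.
move=> [ha ea] [hb eb].
have mu : psh_p P0 a `&` psh_p P0 b <= psh_p P0 u.
  exact: le_trans (leIl _ _) ha.
exists (psh_res P0 u (psh_p P0 a `&` psh_p P0 b)).
rewrite psh_res_p //; split=> //.
split; [|split].
- split; rewrite psh_res_p // ?leIl //.
  by have := psh_res_comp (leIl _ _) ha; rewrite -ea => ->.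
- split; rewrite psh_res_p // ?leIr //.
  by have := psh_res_comp (leIr _ _) hb; rewrite -eb => ->.
- move=> z [hz ez] [hz' ez'].
  have hzm : psh_p P0 z <= psh_p P0 a `&` psh_p P0 b by rewrite lexI hz hz'.
  split; first by rewrite psh_res_p.
  by rewrite psh_res_comp // {1}ez ea psh_res_comp.
Qed.
End H.

Theorem lemma1p8 (d1 d2 : Order.disp_t)
  (B1 : cbDistrLatticeType d1) (B2 : cbDistrLatticeType d2)
  (X Y : Type) (P : presheaf B1 X) (Q : presheaf B2 Y)
  (phi : X -> Y) (phibar : B1 -> B2) :
  boolean_set P -> boolean_set Q -> BS_morphism P Q phi phibar ->
  forall x y j : X, compatible P x y -> is_lub P j x y ->
    is_lub Q (phi j) (phi x) (phi y).
Proof.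
move=> _ [_ _ hjoin _] [[_ hU _ _] hp hres] x y j _ hl.
have mono : forall a b, a <= b -> phibar a <= phibar b.
  move=> a b ab; have e : a `|` b = b by apply/join_idPr.
  by rewrite -e hU leUl.
have phim : forall u v, ple P u v -> ple Q (phi u) (phi v).
  move=> u v [h e]; split; rewrite !hp; first exact: mono.
  by rewrite {1}e hres.
have pj := lub_p P _ _ _ hl.
have [[hx ex] [[hy ey] _]] := hl.
have ux := phim _ _ (conj hx ex); have uy := phim _ _ (conj hy ey).
have [J hJ] := hjoin _ _ (compat_ub Q _ _ _ ux uy).
have <- : J = phi j.
  have [_ [_ hl']] := hJ.
  apply: (ple_same Q _ _) (hl' _ ux uy) _.
  by rewrite (lub_p Q _ _ _ hJ) !hp pj hU.
exact: hJ.
Qed.
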